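(* Let $P_0$ be a domain, $U$ a free $P_0$-module of rank four with dual $U^*=\operatorname{Hom}_{P_0}(U,P_0)$, and $x,y,z,w$ a basis of $U$ with dual basis $x^*,y^*,z^*,w^*$. Let $$\phi_3=ax^{*(2)}y^*+dx^*y^{*(2)}+ey^{*(2)}z^*+fy^{*(2)}w^*+hy^*z^{*(2)}+iz^{*(2)}w^*+ky^*w^{*(2)}+mx^*y^*z^*+nx^*y^*w^*+py^*z^*w^*\in D_3U^*$$ with parameters in $P_0$. Assume (a) $a\neq0$ in $P_0$, and (b) $\ell\phi_3\neq0$ for all nonzero $\ell\in U$. Then $\Gamma_{\phi_3}$ is not identically zero.
   Context: $D_iU^*=\operatorname{Hom}_{P_0}(\operatorname{Sym}_iU,P_0)$; $D_\bullet U^*$ is the divided power algebra, a module over $\operatorname{Sym}_\bullet U$ via $(uv)(u')=v(uu')$. The divided power monomial $x^{*(a_1)}y^{*(a_2)}z^{*(a_3)}w^{*(a_4)}$ takes value $1$ on $x^{a_1}y^{a_2}z^{a_3}w^{a_4}$ and $0$ on all other monomials of that degree; a factor without parenthesized exponent has exponent one. $D_4U$ is the degree-$4$ divided power of $U$. For $X\in D_4U$, $\Delta(X)\in U^{\otimes4}$ is its comultiplication: for $X=\ell_1^{(e_1)}\cdots\ell_s^{(e_s)}$ with $\sum e_j=4$, the sum of all distinct words $u_1\otimes\cdots\otimes u_4$ in which the symbol $\ell_j$ occurs exactly $e_j$ times, extended linearly. $\Gamma_{\phi_3}:D_4U\otimes\bigwedge^4U\to\bigwedge^4U^*$ is the $P_0$-linear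 map $\Gamma_{\phi_3}(X\otimes y_1\wedge\cdots\wedge y_4)=\sum(u_1y_1\phi_3)\wedge\cdots\wedge(u_4y_4\phi_3)$, summed over the terms of $\Delta(X)$. *)

(* Defs.v *)
(* U = P_0^4 via the basis x,y,z,w (indices 0,1,2,3). *)
From mathcomp Require Import all_boot all_algebra.
Set Implicit Arguments. Unset Strict Implicit. Unset Printing Implicit Defensive.
Import GRing.Theory.
Local Open Scope ring_scope.

(* Monomials in Sym U: exponent vectors over the basis x,y,z,w. *)
Definition mono := 'I_4 -> nat.
Definition mdeg (mo : mono) : nat := (\sum_(j < 4) mo j)%N.
Definition unitm (j : 'I_4) : mono := fun k => nat_of_bool (k == j).
Definition maddm (m1 m2 : mono) : mono := fun k => (m1 k + m2 k)%N.
Definition expo (mo : mono) : nat * nat * nat * nat :=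
  (mo (@Ordinal 4 0 isT), mo (@Ordinal 4 1 isT),
   mo (@Ordinal 4 2 isT), mo (@Ordinal 4 3 isT)).

Section Forms.
Variable R : idomainType.

Definition basisU (j : 'I_4) : 'I_4 -> R := fun k => (k == j)%:R.

(* An element of D_i U^* is recorded by its values on the monomials of
   degree i of Sym_i U (divided-power monomials are the dual basis). *)
Definition phi3 (a d e f h i k m n p : R) : mono -> R := fun mo =>
  let t := expo mo in
  if t == (2,1,0,0)%N then a else
  if t == (1,2,0,0)%N then d else
  if t == (0,2,1,0)%N then e else
  if t == (0,2,0,1)%N then f else
  if t == (0,1,2,0)%N then h else
  if t == (0,0,2,1)%N then i else
  if t == (0,1,0,2)%N then k else
  if t == (1,1,1,0)%N then m else
  if t == (1,1,0,1)%N then n else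
  if t == (0,1,1,1)%N then p else 0.

(* Module action of U = Sym_1 U on D U^*: (l v)(u') = v(l u'). *)
Definition contract (l : 'I_4 -> R) (phi : mono -> R) : mono -> R :=
  fun mo => \sum_(j < 4) l j * phi (maddm mo (unitm j)).

Definition content (s : {ffun 'I_4 -> 'I_4}) : mono :=
  fun j => #|[set r | s r == j]|.

(* Gamma_phi (X (x) y_1 /\ ... /\ y_4), with X in D_4 U given by its
   coordinates c on the divided-power monomial basis x^(a1)y^(a2)z^(a3)w^(a4),
   and wedge^4 U^* identified with P_0 via x^* /\ y^* /\ z^* /\ w^* |-> 1.
   Delta(x^(a1)...w^(a4)) is the sum of the words of content (a1,..,a4). *)
Definition Gamma (phi : mono -> R) (c : mono -> R) (ys : 'I_4 -> 'I_4 -> R) : R :=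
  \sum_(s : {ffun 'I_4 -> 'I_4})
     c (content s) *
     \det (\matrix_(r < 4, col < 4)
             contract (basisU (s r)) (contract (ys r) phi) (unitm col)).
End Forms.

(* Main.v *)
Require Import Defs.
From mathcomp Require Import all_boot all_algebra ring zify.
Import GRing.Theory.
Local Open Scope ring_scope.

Lemma ordE n (x : 'I_n) (k : nat) (H : (k < n)%N) : val x = k -> x = Ordinal H.
Proof. by move=> h; apply: val_inj. Qed.
Ltac fix1 t :=
  let n := match type of t with ordinal ?n => n end in
  let k := eval compute in (nat_of_ord t) in
  rewrite (@ordE n t k isT (erefl k)).
Ltac fixords :=
  repeat match goal with
   | |- context [@lift ?n ?i ?j] => fix1 (@lift n i j)
   | |- context [@ord0 ?n] => fix1 (@ord0 n) end.

Notation X := (@Ordinal 4 0 isT).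
Notation Y := (@Ordinal 4 1 isT).
Notation Z := (@Ordinal 4 2 isT).
Notation W := (@Ordinal 4 3 isT).
Definition L4 : seq 'I_4 := [:: X; Y; Z; W].
Definition cntv (u0 u1 u2 u3 : 'I_4) : nat*nat*nat*nat :=
  let c := fun j => ((u0 == j) + (u1 == j) + (u2 == j) + (u3 == j))%N in
  (c X, c Y, c Z, c W).
Definition toI (k : nat) : 'I_4 := match k with 0 => X | 1 => Y | 2 => Z | _ => W end%N.
Definition tup4 := (nat*nat*nat*nat)%type.
Definition mkwn (t : tup4) : {ffun 'I_4 -> 'I_4} :=
  [ffun r : 'I_4 => toI (nth 0%N [:: t.1.1.1; t.1.1.2; t.1.2; t.2] r)].
Definition vals (s : {ffun 'I_4 -> 'I_4}) : tup4 := (val (s X), val (s Y), val (s Z), val (s W)).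

Lemma toI_val (u : 'I_4) : toI (val u) = u.
Proof. by apply: val_inj; case: u => [[|[|[|[|]]]] ?]. Qed.
Lemma in_L4 (u : 'I_4) : u \in L4.
Proof. rewrite -(toI_val u); move: (val u) => k; case: k => [|[|[|[|k]]]] /=; by rewrite /L4 !inE eqxx ?orbT. Qed.

Lemma mkwn_vals s : mkwn (vals s) = s.
Proof. by apply/ffunP => r; rewrite ffunE; case: r => [[|[|[|[|]]]] ?] //=; rewrite toI_val; congr (s _); apply: val_inj. Qed.

Lemma content_cnt s : expo (content s) = cntv (s X) (s Y) (s Z) (s W).
Proof.
have H j : content s j = ((s X == j) + (s Y == j) + (s Z == j) + (s W == j))%N.
  rewrite /content cardsE -sum1_card big_mkcond /= !big_ord_recl big_ord0 /=.
  fixords. by rewrite /bump /= addn0 !addnA.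
by rewrite /expo !H.
Qed.

Section G.
Variable R : idomainType.
Definition ind (al : tup4) : mono -> R := fun mo => if expo mo == al then 1 else 0.
Definition ysI : 'I_4 -> 'I_4 -> R := fun r => basisU R r.
Definition Dw (phi : mono -> R) (s : {ffun 'I_4 -> 'I_4}) : R :=
  \det (\matrix_(r < 4, col < 4) contract (basisU R (s r)) (contract (ysI r) phi) (unitm col)).
Definition chk1 (al : tup4) (L : seq tup4) : bool :=
  all (fun u0 => all (fun u1 => all (fun u2 => all (fun u3 =>
   (cntv u0 u1 u2 u3 == al) ==> ((val u0, val u1, val u2, val u3) \in L)) L4) L4) L4) L4.
Definition chk2 (al : tup4) (L : seq tup4) : bool :=
  all (fun t => [&& (t.1.1.1 < 4)%N, (t.1.1.2 < 4)%N, (t.1.2 < 4)%N, (t.2 < 4)%N &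
       cntv (toI t.1.1.1) (toI t.1.1.2) (toI t.1.2) (toI t.2) == al]) L.

Lemma Gamma_words phi al L : uniq L -> chk1 al L -> chk2 al L ->
  Gamma phi (ind al) ysI = \sum_(t <- L) Dw phi (mkwn t).
Proof.
move=> uL c1 c2.
have mk t : mkwn t X = toI t.1.1.1 /\ mkwn t Y = toI t.1.1.2 /\ mkwn t Z = toI t.1.2 /\ mkwn t W = toI t.2.
  by rewrite !ffunE.
have vm t : t \in L -> vals (mkwn t) = t.
  move=> tL; move/allP: c2 => /(_ t tL) /and5P [h1 h2 h3 h4 _].
  case: t h1 h2 h3 h4 {tL} => [[[t1 t2] t3] t4] /= h1 h2 h3 h4.
  rewrite /vals !ffunE /=.
  by move: h1 h2 h3 h4; case: t1 => [|[|[|[|]]]] //; case: t2 => [|[|[|[|]]]] //; case: t3 => [|[|[|[|]]]] //; case: t4 => [|[|[|[|]]]].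
have uM : uniq (map mkwn L).
  apply: (@map_uniq _ _ vals); rewrite -map_comp.
  have -> : map (vals \o mkwn) L = L by rewrite -{2}(map_id L); apply/eq_in_map => t tL; rewrite /= vm.
  exact: uL.
rewrite /Gamma.
transitivity (\sum_(s | expo (content s) == al) Dw phi s).
  rewrite [RHS]big_mkcond /=; apply: eq_bigr => s _; rewrite /ind /Dw.
  by case: ifP => _; rewrite ?mul1r ?mul0r.
rewrite -(big_map mkwn predT) (big_uniq _ uM) /=.
apply: eq_bigl => s; rewrite content_cnt; apply/idP/idP.
  move=> h; rewrite -(mkwn_vals s); apply: map_f.
  move: c1; rewrite /chk1 => /allP /(_ _ (in_L4 (s X))) /allP /(_ _ (in_L4 (s Y))).
  move=> /allP /(_ _ (in_L4 (s Z))) /allP /(_ _ (in_L4 (s W))).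
  by rewrite h.
case/mapP => t tL ->; have [-> [-> [-> ->]]] := mk t.
by move/allP: c2 => /(_ t tL) /and5P [].
Qed.
End G.

Section D.
Variable R : comNzRingType.
Ltac detsimp := rewrite (expand_det_row _ ord0) !big_ord_recl big_ord0 /cofactor ?det_mx11 ?mxE /=; fixords; rewrite /bump /=.
Notation "A `_2( i , j )" := (A (@Ordinal 2 i isT) (@Ordinal 2 j isT)) (at level 3).
Notation "A `_3( i , j )" := (A (@Ordinal 3 i isT) (@Ordinal 3 j isT)) (at level 3).
Notation "A `_4( i , j )" := (A (@Ordinal 4 i isT) (@Ordinal 4 j isT)) (at level 3).
Lemma det2 (A : 'M[R]_2) : \det A = A`_2(0,0) * A`_2(1,1) - A`_2(0,1) * A`_2(1,0).
Proof. detsimp. ring. Qed.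
Lemma det3 (A : 'M[R]_3) : \det A =
  A`_3(0,0) * (A`_3(1,1) * A`_3(2,2) - A`_3(1,2) * A`_3(2,1))
- A`_3(0,1) * (A`_3(1,0) * A`_3(2,2) - A`_3(1,2) * A`_3(2,0))
+ A`_3(0,2) * (A`_3(1,0) * A`_3(2,1) - A`_3(1,1) * A`_3(2,0)).
Proof. detsimp. rewrite !det2 !mxE /=; fixords; rewrite /bump /=. ring. Qed.
Lemma det4 (A : 'M[R]_4) : \det A =
  A`_4(0,0) * (A`_4(1,1) * (A`_4(2,2) * A`_4(3,3) - A`_4(2,3) * A`_4(3,2)) - A`_4(1,2) * (A`_4(2,1) * A`_4(3,3) - A`_4(2,3) * A`_4(3,1)) + A`_4(1,3) * (A`_4(2,1) * A`_4(3,2) - A`_4(2,2) * A`_4(3,1)))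
- A`_4(0,1) * (A`_4(1,0) * (A`_4(2,2) * A`_4(3,3) - A`_4(2,3) * A`_4(3,2)) - A`_4(1,2) * (A`_4(2,0) * A`_4(3,3) - A`_4(2,3) * A`_4(3,0)) + A`_4(1,3) * (A`_4(2,0) * A`_4(3,2) - A`_4(2,2) * A`_4(3,0)))
+ A`_4(0,2) * (A`_4(1,0) * (A`_4(2,1) * A`_4(3,3) - A`_4(2,3) * A`_4(3,1)) - A`_4(1,1) * (A`_4(2,0) * A`_4(3,3) - A`_4(2,3) * A`_4(3,0)) + A`_4(1,3) * (A`_4(2,0) * A`_4(3,1) - A`_4(2,1) * A`_4(3,0)))
- A`_4(0,3) * (A`_4(1,0) * (A`_4(2,1) * A`_4(3,2) - A`_4(2,2) * A`_4(3,1)) - A`_4(1,1) * (A`_4(2,0) * A`_4(3,2) - A`_4(2,2) * A`_4(3,0)) + A`_4(1,2) * (A`_4(2,0) * A`_4(3,1) - A`_4(2,1) * A`_4(3,0))).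
Proof. detsimp. rewrite !det3 !mxE /=; fixords; rewrite /bump /=. ring. Qed.

Definition detF (A : 'I_4 -> 'I_4 -> R) : R :=
  A X X * (A Y Y * (A Z Z * A W W - A Z W * A W Z) - A Y Z * (A Z Y * A W W - A Z W * A W Y) + A Y W * (A Z Y * A W Z - A Z Z * A W Y))
- A X Y * (A Y X * (A Z Z * A W W - A Z W * A W Z) - A Y Z * (A Z X * A W W - A Z W * A W X) + A Y W * (A Z X * A W Z - A Z Z * A W X))
+ A X Z * (A Y X * (A Z Y * A W W - A Z W * A W Y) - A Y Y * (A Z X * A W W - A Z W * A W X) + A Y W * (A Z X * A W Y - A Z Y * A W X))
- A X W * (A Y X * (A Z Y * A W Z - A Z Z * A W Y) - A Y Y * (A Z X * A W Z - A Z Z * A W X) + A Y Z * (A Z X * A W Y - A Z Y * A W X)).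
Lemma det4' (A : 'M[R]_4) : \det A = detF (fun r c => A r c).
Proof. by rewrite det4. Qed.
Lemma detF_ext (A B : 'I_4 -> 'I_4 -> R) : (forall r c, A r c = B r c) -> detF A = detF B.
Proof. by move=> H; rewrite /detF !H. Qed.
End D.

Section P.
Variable R : idomainType.
Lemma contract_basis u (psi : mono -> R) mo : contract (basisU R u) psi mo = psi (maddm mo (unitm u)).
Proof.
rewrite /contract (bigD1 u) //= big1 => [|j /negbTE ne]; rewrite /basisU ?eqxx ?ne ?mul1r ?mul0r ?addr0 //.
Qed.

Lemma Dw_mk (phi : mono -> R) t : Dw R phi (mkwn t) = detF R (fun r c => phi (maddm (maddm (unitm c) (unitm (toI (nth 0%N [:: t.1.1.1; t.1.1.2; t.1.2; t.2] r)))) (unitm r))).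
Proof. rewrite /Dw det4'; apply: detF_ext => r c; by rewrite mxE /ysI !contract_basis ffunE. Qed.
Variables a d e f h i k m n p : R.
Notation phi := (phi3 a d e f h i k m n p).
Lemma G0400 : Gamma phi (ind R (0,4,0,0)%N) (ysI R) =
  - a * e^+2 * k + 2 * a * e * f * p - a * f^+2 * h - d^+2 * h * k + d^+2 * p^+2 + 2 * d * e * k * m - 2 * d * e * n * p - 2 * d * f * m * p + 2 * d * f * h * n + f^+2 * m^+2 - 2 * e * f * m * n + e^+2 * n^+2.
Proof.
rewrite (@Gamma_words _ _ _ [:: (1,1,1,1)%N]); [|by []|by vm_compute|by vm_compute].
rewrite !big_cons big_nil addr0 !Dw_mk /detF /=.
rewrite /phi3 /expo /maddm /unitm /=.
ring.
Qed.

Lemma eq0_by (x y : R) : x = y -> y = 0 -> x = 0.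
Proof. by move=> ->. Qed.

Lemma contract0 (l : 'I_4 -> R) : i = 0 -> l Y = 0 ->
  a * l X + m * l Z + n * l W = 0 ->
  m * l X + h * l Z + p * l W = 0 ->
  n * l X + p * l Z + k * l W = 0 ->
  d * l X + e * l Z + f * l W = 0 ->
  forall mo : mono, mdeg mo = 2%N -> contract l phi mo = 0.
Proof.
move=> i0 lY H1 H2 H3 H4 mo.
rewrite /mdeg /contract !big_ord_recl !big_ord0; fixords; rewrite /bump /=.
rewrite /phi3 /expo /maddm /unitm /= i0 lY.
move: (mo X) (mo Y) (mo Z) (mo W) => x0 x1 x2 x3.
move=> hs.
have: (x0 <= 2 /\ x1 <= 2 /\ x2 <= 2 /\ x3 <= 2)%N by lia.
case=> [+ [+ [+ +]]].
case: x0 hs => [|[|[|x0]]] //; case: x1 => [|[|[|x1]]] //; case: x2 => [|[|[|x2]]] //; case: x3 => [|[|[|x3]]] //= _ _ _ _ _;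
  first [ ring | (apply: (@eq0_by _ _ _ H1); ring) | (apply: (@eq0_by _ _ _ H2); ring) | (apply: (@eq0_by _ _ _ H3); ring) | (apply: (@eq0_by _ _ _ H4); ring) ].
Qed.

Lemma G2020 : Gamma phi (ind R (2,0,2,0)%N) (ysI R) = a^+2 * i^+2.
Proof.
rewrite (@Gamma_words _ _ _ [:: (0,0,2,2); (0,2,0,2); (0,2,2,0); (2,0,0,2); (2,0,2,0); (2,2,0,0)]%N); [|by []|by vm_compute|by vm_compute].
rewrite !big_cons big_nil addr0 !Dw_mk /detF /=.
rewrite /phi3 /expo /maddm /unitm /=.
ring.
Qed.

Lemma G2200 : Gamma phi (ind R (2,2,0,0)%N) (ysI R) =
  a * (a * (p^+2 - h * k) + k * m^+2 - 2 * m * n * p + h * n^+2).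
Proof.
rewrite (@Gamma_words _ _ _ [:: (0,0,1,1); (0,1,0,1); (0,1,1,0); (1,0,0,1); (1,0,1,0); (1,1,0,0)]%N); [|by []|by vm_compute|by vm_compute].
rewrite !big_cons big_nil addr0 !Dw_mk /detF /=.
rewrite /phi3 /expo /maddm /unitm /=.
ring.
Qed.
End P.


Theorem proposition7p1 (R : idomainType) (a d e f h i k m n p : R) :
  a != 0 ->
  (forall l : 'I_4 -> R, (exists j, l j != 0) ->
     exists mo : mono, mdeg mo = 2%N /\ contract l (phi3 a d e f h i k m n p) mo != 0) ->
  exists (c : mono -> R) (ys : 'I_4 -> 'I_4 -> R),
    Gamma (phi3 a d e f h i k m n p) c ys != 0.
Proof.
move=> a0 hb.
have [i0|inz] := eqVneq i 0; last first.
  exists (ind R (2,0,2,0)%N), (ysI R); rewrite G2020.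
  by rewrite mulf_neq0 // expf_neq0.
have [Q0|Qnz] := eqVneq (a * (p^+2 - h * k) + k * m^+2 - 2 * m * n * p + h * n^+2) 0; last first.
  exists (ind R (2,2,0,0)%N), (ysI R); rewrite G2200.
  by rewrite mulf_neq0.
have [G0z|G0nz] := eqVneq (- a * e^+2 * k + 2 * a * e * f * p - a * f^+2 * h - d^+2 * h * k + d^+2 * p^+2 + 2 * d * e * k * m - 2 * d * e * n * p - 2 * d * f * m * p + 2 * d * f * h * n + f^+2 * m^+2 - 2 * e * f * m * n + e^+2 * n^+2) 0; last first.
  by exists (ind R (0,4,0,0)%N), (ysI R); rewrite G0400.
exfalso.
have key : forall l2 l3 : R, (l2 != 0) || (l3 != 0) ->
    (a * h - m^+2) * l2 + (a * p - m * n) * l3 = 0 ->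
    (a * p - m * n) * l2 + (a * k - n^+2) * l3 = 0 ->
    (a * e - d * m) * l2 + (a * f - d * n) * l3 = 0 -> False.
  move=> l2 l3 nz E1 E2 E3.
  pose l : 'I_4 -> R := fun j => match nat_of_ord j with 0%N => -(m * l2 + n * l3) | 1%N => 0 | 2%N => a * l2 | _ => a * l3 end.
  have lnz : exists j, l j != 0.
    case/orP: nz => nz; [exists Z | exists W]; by rewrite /l /= mulf_neq0.
  have [mo [md cn]] := hb l lnz.
  move/negP: cn; apply; apply/eqP.
  apply: (@contract0 R a d e f h i k m n p l i0) => //; rewrite /l /=.
  - ring.
  - by apply: (@eq0_by R _ _ _ E1); ring.
  - by apply: (@eq0_by R _ _ _ E2); ring.
  - by apply: (@eq0_by R _ _ _ E3); ring.
have SQ : (a * h - m^+2) * (a * k - n^+2) = (a * p - m * n)^+2.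
  apply/eqP; rewrite -subr_eq0; apply/eqP.
  apply: (@eq0_by R _ (- a * (a * (p^+2 - h * k) + k * m^+2 - 2 * m * n * p + h * n^+2))); first ring.
  by rewrite Q0 mulr0.
have SS : (a * k - n^+2) * (a * e - d * m)^+2 - 2 * (a * p - m * n) * (a * e - d * m) * (a * f - d * n) + (a * h - m^+2) * (a * f - d * n)^+2 = 0.
  apply: (@eq0_by R _ (a * d^+2 * (a * (p^+2 - h * k) + k * m^+2 - 2 * m * n * p + h * n^+2) - a^+2 * (- a * e^+2 * k + 2 * a * e * f * p - a * f^+2 * h - d^+2 * h * k + d^+2 * p^+2 + 2 * d * e * k * m - 2 * d * e * n * p - 2 * d * f * m * p + 2 * d * f * h * n + f^+2 * m^+2 - 2 * e * f * m * n + e^+2 * n^+2))); first ring.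
  by rewrite Q0 G0z mulr0 mulr0 subrr.
have [A0|Anz] := eqVneq (a * h - m^+2) 0.
  have B0 : a * p - m * n = 0.
    have : (a * p - m * n)^+2 == 0 by rewrite -SQ A0 mul0r.
    by rewrite expf_eq0 /= => /eqP.
  have [g0|gnz] := eqVneq (a * e - d * m) 0.
    apply: (key 1 0); first by rewrite oner_eq0.
    - by rewrite A0 B0; ring.
    - by rewrite B0; apply: (@eq0_by R _ ((a * k - n^+2) * 0)); ring.
    - by rewrite g0; ring.
  have C0 : a * k - n^+2 = 0.
    have : (a * k - n^+2) * (a * e - d * m)^+2 == 0 by apply/eqP; rewrite -SS A0 B0; ring.
    by rewrite mulf_eq0 expf_eq0 /= (negbTE gnz) orbF => /eqP.
  apply: (key (a * f - d * n) (- (a * e - d * m))); first by rewrite oppr_eq0 gnz orbT.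
  - by rewrite A0 B0; ring.
  - by rewrite B0 C0; ring.
  - ring.
apply: (key (a * p - m * n) (- (a * h - m^+2))); first by rewrite oppr_eq0 Anz orbT.
- ring.
- by apply: (@eq0_by R _ ((a * p - m * n)^+2 - (a * h - m^+2) * (a * k - n^+2))); [ring | rewrite SQ subrr].
- have sq : ((a * e - d * m) * (a * p - m * n) + (a * f - d * n) * - (a * h - m^+2))^+2 = 0.
    apply: (@eq0_by R _ ((a * h - m^+2) * ((a * k - n^+2) * (a * e - d * m)^+2 - 2 * (a * p - m * n) * (a * e - d * m) * (a * f - d * n) + (a * h - m^+2) * (a * f - d * n)^+2) - ((a * h - m^+2) * (a * k - n^+2) - (a * p - m * n)^+2) * (a * e - d * m)^+2)); first ring.
    by rewrite SS SQ subrr mulr0 mul0r subrr.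
  by move/eqP: sq; rewrite expf_eq0 /= => /eqP.
Qed.
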